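(* Let $X$ be a Hausdorff topological space and $f:X\to X$ a continuous mapping. Suppose there exists $x_0\in X$ such that for each open cover $\mathcal{U}$ of $X$ there are $n\in\mathbb{N}_0$ and $U\in\mathcal{U}$ with $\{f^n(x_0),f^{n+1}(x_0)\}\subseteq U$. Then $f$ has a fixed point.
   Context: $\mathbb{N}_0=\{0,1,2,\dots\}$; $f^n$ denotes the $n$-fold iterate of $f$, with $f^0$ the identity. *)

(* Defs.v *)
From HB Require Import structures.
From mathcomp Require Import all_boot all_order.
From mathcomp Require Import all_classical all_reals all_analysis.
Set Implicit Arguments. Unset Strict Implicit. Unset Printing Implicit Defensive.

(* Main.v *)
Require Import Defs.
From HB Require Import structures.
From mathcomp Require Import all_boot all_order.
From mathcomp Require Import all_classical all_reals all_analysis.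
Local Open Scope classical_set_scope.

Theorem theorem3 (X : topologicalType) (f : X -> X) :
  hausdorff_space X -> continuous f ->
  (exists x0 : X, forall C : set (set X),
      (forall U, C U -> open U) -> (\bigcup_(U in C) U = setT) ->
      exists (n : nat) (U : set X),
        C U /\ U (iter n f x0) /\ U (iter n.+1 f x0)) ->
  exists x : X, f x = x.
Proof.
move=> hX fc [x0 Hx0].
apply: contrapT => nfix.
have cov : \bigcup_(U in [set U | open U /\ forall y, U y -> ~ U (f y)]) U = setT.
  apply/seteqP; split => // x _.
  have nx : x != f x by apply/eqP => e; apply: nfix; exists x.
  move: hX; rewrite open_hausdorff => /(_ _ _ nx) [[A B] /= [xA yB]
    [oA oB /eqP AB0]].
  exists (A `&` f @^-1` B); last by split; [exact/set_mem | exact/set_mem].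
  split.
    apply: openI => //; apply: open_comp => // z _; exact: fc.
  move=> y [Ay By] [Afy _].
  have : (A `&` B) (f y) by [].
  by rewrite AB0.
have [n [U [[oU HU] [U1 U2]]]] :=
  Hx0 [set U | open U /\ forall y, U y -> ~ U (f y)] (fun U h => h.1) cov.
by apply: (HU _ U1); rewrite iterS in U2.
Qed.
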